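(* Let $K$ be a field of characteristic $\neq2$ with the identity involution, let $\varepsilon,\delta\in\{1,-1\}$, and suppose $A$ is a nonsingular $n\times n$ matrix and $\Phi$ an $n\times n$ Frobenius block with $A=\varepsilon A^T$ and $A\Phi=\delta(A\Phi)^T$. Then $\varepsilon=1$ or $\delta=1$. If moreover $\chi_\Phi(x)=x^n$, then $\varepsilon=1$ when $n$ is odd and $\delta=1$ when $n$ is even.
   Context: A Frobenius block is an $n\times n$ matrix $\Phi$ with ones on the subdiagonal, last column $(-c_n,\dots,-c_1)^T$, zeros elsewhere, whose characteristic polynomial $\chi_\Phi(x)=x^n+c_1x^{n-1}+\dots+c_n$ is a power of an irreducible polynomial. With the identity involution, $A^*=A^T$. *)

(* Defs.v *)
From HB Require Import structures.
From mathcomp Require Import all_boot all_order all_algebra.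
Set Implicit Arguments. Unset Strict Implicit. Unset Printing Implicit Defensive.
Import GRing.Theory.
Local Open Scope ring_scope.

(* A Frobenius block: an n x n matrix with ones on the subdiagonal, zeros
   elsewhere outside the last column (the last column, (-c_n,...,-c_1)^T, is
   arbitrary: its entries are determined by the characteristic polynomial),
   whose characteristic polynomial is a power of an irreducible polynomial. *)
Definition frobenius_block (K : fieldType) (n : nat) (Phi : 'M[K]_n) : Prop :=
  (forall i j : 'I_n, (j : nat) != n.-1 -> Phi i j = ((i : nat) == j.+1)%:R) /\
  exists (q : {poly K}) (k : nat), irreducible_poly q /\ char_poly Phi = q ^+ k.

(* Main.v *)
Require Import Defs.
From HB Require Import structures.
From mathcomp Require Import all_boot all_order all_algebra.
From mathcomp Require Import ring zify.
Import GRing.Theory.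
Local Open Scope ring_scope.

Lemma sum_delta (K : fieldType) m (g : 'I_m.+1 -> K) k : (k <= m)%N ->
  \sum_l g l * ((l : nat) == k)%:R = g (inord k).
Proof.
move=> hk; rewrite (bigD1 (inord k)) //= inordK ?ltnS // eqxx mulr1.
rewrite big1 ?addr0 // => l Hl; case: eqP => [El|]; last by rewrite mulr0.
by move: Hl; rewrite -El inord_val eqxx.
Qed.

Lemma AP_entry (K : fieldType) m (A Phi : 'M[K]_m.+1) (i j : 'I_m.+1) :
  (forall i j : 'I_m.+1, (j:nat) != m -> Phi i j = ((i:nat) == j.+1)%:R) ->
  (j:nat) != m -> (A *m Phi) i j = A i (inord j.+1).
Proof.
move=> HP Hj; rewrite mxE.
under eq_bigr => l _ do rewrite HP //.
apply: sum_delta; have := ltn_ord j; rewrite ltnS leq_eqVlt (negPf Hj) //.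
Qed.

Lemma not_unit0 (K : fieldType) m (A : 'M[K]_m.+1) : A \in unitmx ->
  (forall i j, A i j = 0) -> False.
Proof.
move=> HU H0; have : A = 0 by apply/matrixP => i j; rewrite H0 mxE.
move=> E; move: HU; by rewrite E unitmxE det0 unitr0.
Qed.

Lemma half0 (K : fieldType) (x : K) : (2%:R : K) != 0 -> x = - x -> x = 0.
Proof.
move=> H2 E; have : 2%:R * x = 0 by rewrite mulr_natl mulr2n {1}E addNr.
by move/eqP; rewrite mulf_eq0 (negPf H2) /= => /eqP.
Qed.

Theorem lemma8 (K : fieldType) (n : nat) (eps delta : K) (A Phi : 'M[K]_n) :
  (2%:R : K) != 0 -> (0 < n)%N ->
  (eps = 1 \/ eps = -1) -> (delta = 1 \/ delta = -1) ->
  A \in unitmx -> frobenius_block Phi ->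
  A = eps *: A^T -> A *m Phi = delta *: (A *m Phi)^T ->
  (eps = 1 \/ delta = 1) /\
  (char_poly Phi = 'X^n -> (odd n -> eps = 1) /\ (~~ odd n -> delta = 1)).
Proof.
case: n A Phi => [//|m] A Phi H2 _ Heps Hdelta HU [HP _] HA HAP.
have HP' : forall i j : 'I_m.+1, (j:nat) != m -> Phi i j = ((i:nat) == j.+1)%:R.
  by move=> i j; apply: HP.
pose f := fun a b : nat => (A (inord a) (inord b) : K).
pose s := delta * eps.
have ss : s * s = 1.
  by rewrite /s; case: Heps => ->; case: Hdelta => ->; ring.
have ee : eps * eps = 1 by case: Heps => ->; ring.
have dd : delta * delta = 1 by case: Hdelta => ->; ring.
have Hrel : forall a b, (a < m)%N -> (b < m)%N -> f a.+1 b = s * f a b.+1.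
  move=> a b ha hb.
  have E := congr1 (fun M : 'M[K]_m.+1 => M (inord a) (inord b)) HAP.
  have ha' : ((inord a : 'I_m.+1) : nat) = a by rewrite inordK // ltnS ltnW.
  have hb' : ((inord b : 'I_m.+1) : nat) = b by rewrite inordK // ltnS ltnW.
  move: E => /=; rewrite [in RHS]mxE [X in _ * X]mxE !AP_entry ?ha' ?hb' ?ltn_eqF //.
  have HA' : A (inord b) (inord a.+1) = eps * A (inord a.+1) (inord b).
    by rewrite {1}HA !mxE.
  rewrite HA' => E; rewrite /f E [delta * _]mulrA -/s mulrA ss mul1r //.
have Hch : forall k a b, (a + k <= m)%N -> (b + k <= m)%N ->
    f (a + k)%N b = s ^+ k * f a (b + k)%N.
  elim => [|k IH] a b h1 h2; first by rewrite !addn0 expr0 mul1r.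
  rewrite addnS Hrel; [| lia | lia].
  rewrite IH; [| lia | lia]. by rewrite addSnnS exprS mulrA.
have skew : forall a b, f a b = eps * f b a.
  by move=> a b; rewrite /f {1}HA !mxE.
have Hf : forall i j : 'I_m.+1, A i j = f i j by move=> i j; rewrite /f !inord_val.
have P1 : eps = 1 \/ delta = 1.
  case: Heps => He; [by left|]. case: Hdelta => Hd; [by right|]. exfalso.
  have s1 : s = 1 by rewrite /s He Hd; ring.
  have sym : forall a b, (a <= b <= m)%N -> f b a = f a b.
    move=> a b /andP[hab hbm]; have := Hch (b - a)%N a a.
    rewrite subnKC // s1 expr1n mul1r; by apply.
  have z : forall a b, (a <= b <= m)%N -> f a b = 0 /\ f b a = 0.
    move=> a b hab; have h0 : f a b = 0.
      by apply: half0 => //; rewrite {1}skew He mulN1r sym.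
    by split => //; rewrite sym.
  apply: (@not_unit0 _ _ A HU) => i j; rewrite Hf.
  have hm : forall k : 'I_m.+1, (k <= m)%N by move=> k; rewrite -ltnS ltn_ord.
  case: (leqP i j) => hij.
    have hh : (i <= j <= m)%N by rewrite hij hm.
    by case: (z _ _ hh).
  have hh : (j <= i <= m)%N by rewrite (ltnW hij) hm.
  by case: (z _ _ hh).
split => // Hcp; split.
  move=> Ho; case: Heps => // He; exfalso.
  have : \det A = 0.
    apply: half0 => //; rewrite {1}HA detZ det_tr He -signr_odd Ho expr1 mulN1r //.
  by move=> E; move: HU; rewrite unitmxE E unitr0.
move=> Hev; case: Hdelta => // Hd; exfalso.
have He : eps = 1.
  case: P1 => // Hd1; have : (1 : K) = 0 by apply: half0 => //; rewrite -{1}Hd1 Hd.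
  by move/eqP; rewrite oner_eq0.
have CH := Cayley_Hamilton Phi.
rewrite Hcp rmorphXn /= horner_mx_X in CH.
have col : forall k, (k <= m)%N -> forall i : 'I_m.+1,
    (Phi ^+ k) i ord0 = ((i:nat) == k)%:R.
  elim => [|k IH] hk i; first by rewrite expr0 mxE.
  rewrite exprS -mulmxE mxE.
  under eq_bigr => l _ do rewrite IH ?(ltnW hk) //.
  rewrite sum_delta ?(ltnW hk) //.
  have hk' : ((inord k : 'I_m.+1) : nat) = k by rewrite inordK // ltnS ltnW.
  by rewrite HP' hk' // ltn_eqF.
have lc : forall i, Phi i ord_max = 0.
  move=> i0; have := congr1 (fun M : 'M[K]_m.+1 => M i0 ord0) CH.
  rewrite exprS -mulmxE mxE /=.
  under eq_bigr => l _ do rewrite col //.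
  rewrite sum_delta // mxE.
  by have -> : (inord m : 'I_m.+1) = ord_max by apply: val_inj; rewrite /= inordK.
have hmax : (inord m : 'I_m.+1) = ord_max by apply: val_inj; rewrite /= inordK.
have APc : forall i, (A *m Phi) i ord_max = 0.
  by move=> i; rewrite mxE big1 // => l _; rewrite lc mulr0.
have row1 : forall j, (j < m)%N -> f m j.+1 = 0.
  move=> j hj.
  have := congr1 (fun M : 'M[K]_m.+1 => M ord_max (inord j)) HAP.
  rewrite /= [in RHS]mxE [X in _ * X]mxE.
  have hj' : ((inord j : 'I_m.+1) : nat) = j by rewrite inordK // ltnS ltnW.
  rewrite APc mulr0 AP_entry ?hj' ?ltn_eqF // /f => <-.
  by rewrite hmax.
have hmo : odd m by move: Hev => /=; rewrite negbK.
have f0 : f m 0%N = 0.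
  apply: half0 => //.
  have E := Hch m 0%N 0%N; rewrite !add0n in E; rewrite {1}E ?leqnn //.
  rewrite (skew 0%N m) /s Hd He mulr1 -signr_odd hmo expr1 !mulN1r mul1r //.
have rowz : forall k : 'I_m.+1, A ord_max k = 0.
  move=> k; rewrite Hf /=; case: k => [[|k] hk] /=; first exact: f0.
  by apply: row1.
have := mulmxV HU.
move/(congr1 (fun M : 'M[K]_m.+1 => M ord_max ord_max)).
rewrite !mxE big1 ?eqxx; last by move=> l _; rewrite rowz mul0r.
by move/eqP; rewrite eq_sym oner_eq0.
Qed.
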